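(* Let $M=(Q,\mathcal{A},\Delta,I,F)$ be a globally mintermised symbolic finite automaton and let $N=(Q,\mathbb{P}_\Delta,\Delta,I,F)$ be its syntactic NFA. Then $\preceq_M = \preceq_N$.
   Context: An effective Boolean algebra is $\mathcal{A}=(\mathfrak{D},\mathbb{P},[\![\cdot]\!],\vee,\wedge,\neg)$ where $\mathbb{P}$ is a set of predicates closed under $\vee,\wedge,\neg$, and $[\![\cdot]\!]:\mathbb{P}\to 2^{\mathfrak{D}}$ satisfies $[\![\varphi\vee\psi]\!]=[\![\varphi]\!]\cup[\![\psi]\!]$, $[\![\varphi\wedge\psi]\!]=[\![\varphi]\!]\cap[\![\psi]\!]$, $[\![\neg\varphi]\!]=\mathfrak{D}\setminus[\![\varphi]\!]$; $\mathit{IsSat}(\varphi)$ means $[\![\varphi]\!]\neq\emptyset$, and all operations and $\mathit{IsSat}$ are computable. A symbolic finite automaton (SFA) is $M=(Q,\mathcal{A},\Delta,I,F)$ with finite state set $Q$, a finite transition relation $\Delta\subseteq Q\times\mathbb{P}\times Q$ whose predicates are all satisfiable, initial states $I$ and final states $F$. Its concrete transitions are $[\![\Delta]\!]=\{(q,a,p)\mid (q,\psi,p)\in\Delta,\ a\in[\![\psi]\!]\}$. Let $\mathbb{P}_\Delta=\{\varphi\mid \exists p,q:(p,\varphi,q)\in\Delta\}$. A set of predicates is a partition if the denotations of any two distinct members are disjoint. $M$ is globally mintermised if $\mathbb{P}_\Delta$ is a partition. The syntactic NFA of $M$ is $(Q,\mathbb{P}_\Delta,\Delta,I,F)$, i.e.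 the NFA over the finite alphabet $\mathbb{P}_\Delta$ whose transitions are those of $\Delta$ with predicates treated as plain (syntactic) letters. A relation $S\subseteq Q\times Q$ is a simulation on the SFA $M$ if whenever $(p,r)\in S$: (C1) $p\in F$ implies $r\in F$; (C2) for all $a\in\mathfrak{D}$ and $p'$ with $(p,a,p')\in[\![\Delta]\!]$ there is $r'$ with $(r,a,r')\in[\![\Delta]\!]$ and $(p',r')\in S$. For an NFA (finite alphabet $\Sigma$, transitions $\Delta\subseteq Q\times\Sigma\times Q$), simulation is defined the same way with $a$ ranging over $\Sigma$ and the transitions of $\Delta$. $\preceq_M$ (resp. $\preceq_N$) denotes the unique maximal simulation on $M$ (resp. $N$). *)

(* Defs.v *)
From Stdlib Require Import List.
Import ListNotations.

Record EBA := {
  dom : Type;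
  pred : Type;
  den : pred -> dom -> Prop;
  por : pred -> pred -> pred;
  pand : pred -> pred -> pred;
  pnot : pred -> pred;
  den_or : forall f g a, den (por f g) a <-> (den f a \/ den g a);
  den_and : forall f g a, den (pand f g) a <-> (den f a /\ den g a);
  den_not : forall f a, den (pnot f) a <-> ~ den f a;
  isSat : pred -> bool;
  isSat_spec : forall f, isSat f = true <-> exists a, den f a
}.

Record SFA (A : EBA) := {
  state : Type;
  states : list state;
  states_full : forall q, In q states;         (* Q is finite *)
  delta : list (state * pred A * state);
  delta_sat : forall q f p, In (q, f, p) delta -> exists a, den A f a;
  init : state -> Prop;
  final : state -> Prop
}.
Arguments state {A}.
Arguments delta {A}.
Arguments init {A}.
Arguments final {A}.

Definition concrete_trans {A : EBA} (M : SFA A) (q : state M) (a : dom A) (p : state M) : Prop :=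
  exists f, In (q, f, p) (delta M) /\ den A f a.

Definition P_Delta {A : EBA} (M : SFA A) (f : pred A) : Prop :=
  exists p q, In (p, f, q) (delta M).

Definition is_partition {A : EBA} (S : pred A -> Prop) : Prop :=
  forall f g, S f -> S g -> f <> g -> forall a, ~ (den A f a /\ den A g a).

Definition globally_mintermised {A : EBA} (M : SFA A) : Prop :=
  is_partition (P_Delta M).

Definition is_sim_SFA {A : EBA} (M : SFA A) (S : state M -> state M -> Prop) : Prop :=
  forall p r, S p r ->
    (final M p -> final M r) /\
    (forall a p', concrete_trans M p a p' ->
       exists r', concrete_trans M r a r' /\ S p' r').

(* The syntactic NFA N = (Q, P_Delta, Delta, I, F): alphabet is P_Delta,
   letters are predicates compared syntactically, transitions are Delta. *)
Definition is_sim_synNFA {A : EBA} (M : SFA A) (S : state M -> state M -> Prop) : Prop :=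
  forall p r, S p r ->
    (final M p -> final M r) /\
    (forall f p', P_Delta M f -> In (p, f, p') (delta M) ->
       exists r', In (r, f, r') (delta M) /\ S p' r').

Definition max_sim_SFA {A : EBA} (M : SFA A) (p r : state M) : Prop :=
  exists S, is_sim_SFA M S /\ S p r.

Definition max_sim_synNFA {A : EBA} (M : SFA A) (p r : state M) : Prop :=
  exists S, is_sim_synNFA M S /\ S p r.

(* Main.v *)
Require Import Defs.
From Stdlib Require Import List Classical.

Theorem lemma2 (A : EBA) (M : SFA A) :
  globally_mintermised M ->
  forall p r : state M, max_sim_SFA M p r <-> max_sim_synNFA M p r.
Proof.
  intros Hg p r; split.
  - intros [S [HS Spr]]. exists S; split; [|exact Spr].
    intros p0 r0 H0. destruct (HS p0 r0 H0) as [Hf Ht]. split; [exact Hf|].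
    intros f p' Pf Hin.
    destruct (delta_sat A M _ _ _ Hin) as [a Ha].
    destruct (Ht a p') as [r' [[g [Hg' Hga]] HS']].
    { exists f; split; assumption. }
    exists r'; split; [|exact HS'].
    assert (f = g) as ->.
    { apply NNPP; intro Hne.
      apply (Hg f g Pf (ex_intro _ r0 (ex_intro _ r' Hg')) Hne a); split; assumption. }
    exact Hg'.
  - intros [S [HS Spr]]. exists S; split; [|exact Spr].
    intros p0 r0 H0. destruct (HS p0 r0 H0) as [Hf Ht]. split; [exact Hf|].
    intros a p' [f [Hin Ha]].
    destruct (Ht f p' (ex_intro _ p0 (ex_intro _ p' Hin)) Hin) as [r' [Hr' HS']].
    exists r'; split; [exists f; split; assumption | exact HS'].
Qed.
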